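(* Let $t$ be a normal $\lambda$-term, $v$ a $\lambda$-term, and $\alpha,x$ variables with $x\in Fv(t)$, and let $x_1,\dots,x_n$ ($n\ge 0$) be variables distinct from $\alpha$. If $t[\lambda x_1\dots\lambda x_n\alpha/x]\rightarrow_\beta v$, then $\alpha\in Fv(v)$.
   Context: $\lambda$-terms are those of the untyped $\lambda$-calculus; $Fv(t)$ is the set of free variables of $t$; $t[u/x]$ is capture-avoiding substitution; $\rightarrow_\beta$ denotes $\beta$-reduction in zero or more steps; a term is normal if it contains no $\beta$-redex. *)

(* Defs.v *)
From Stdlib Require Import Arith.

Inductive term : Type :=
| Var : nat -> term
| App : term -> term -> term
| Lam : term -> term.

Fixpoint lift (d c : nat) (t : term) : term :=
  match t with
  | Var k => if c <=? k then Var (k + d) else Var k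
  | App a b => App (lift d c a) (lift d c b)
  | Lam b => Lam (lift d (S c) b)
  end.

Fixpoint bsubst (u : term) (k : nat) (t : term) : term :=
  match t with
  | Var m => if m =? k then lift k 0 u
             else if k <? m then Var (pred m) else Var m
  | App a b => App (bsubst u k a) (bsubst u k b)
  | Lam b => Lam (bsubst u (S k) b)
  end.

(* capture-avoiding substitution t[u/x] of the free variable x by u,
   all other free variables keep their identity (named-style substitution) *)
Fixpoint fsubst_at (d : nat) (u : term) (x : nat) (t : term) : term :=
  match t with
  | Var m => if m =? x + d then lift d 0 u else Var m
  | App a b => App (fsubst_at d u x a) (fsubst_at d u x b)
  | Lam b => Lam (fsubst_at (S d) u x b)
  end.

Definition fsubst (u : term) (x : nat) (t : term) : term := fsubst_at 0 u x t.

Fixpoint free_in (x : nat) (t : term) : Prop :=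
  match t with
  | Var m => m = x
  | App a b => free_in x a \/ free_in x b
  | Lam b => free_in (S x) b
  end.

Inductive beta : term -> term -> Prop :=
| beta_redex : forall b u, beta (App (Lam b) u) (bsubst u 0 b)
| beta_appl : forall a a' b, beta a a' -> beta (App a b) (App a' b)
| beta_appr : forall a b b', beta b b' -> beta (App a b) (App a b')
| beta_lam : forall b b', beta b b' -> beta (Lam b) (Lam b').

Inductive beta_star : term -> term -> Prop :=
| beta_refl : forall t, beta_star t t
| beta_step : forall t u v, beta t u -> beta_star u v -> beta_star t v.

Fixpoint normal (t : term) : Prop :=
  match t with
  | Var _ => True
  | Lam b => normal b
  | App a b => normal a /\ normal b /\ (match a with Lam _ => False | _ => True end)
  end.

Fixpoint lams (n : nat) (t : term) : term :=
  match n with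
  | 0 => t
  | S n' => Lam (lams n' t)
  end.

(* Main.v *)
Require Import Defs.
From Stdlib Require Import Arith Lia.

Section S.
Variable alpha : nat.

Inductive sp : nat -> term -> Prop :=
| sp_var : forall d k, sp d (Var k)
| sp_head : forall d m k, k = alpha + d + m -> sp d (lams m (Var k))
| sp_app : forall d a b, sp d a -> good d b -> sp d (App a b)
with good : nat -> term -> Prop :=
| good_lam : forall d b, good (S d) b -> good d (Lam b)
| good_sp : forall d t, sp d t -> good d t.

Lemma lams_var_nf : forall m k t', beta (lams m (Var k)) t' -> False.
Proof.
  induction m; simpl; intros k t' H; inversion H; subst; eauto.
Qed.

Lemma bsubst_lams : forall j u k v, k + j < v ->
  bsubst u k (lams j (Var v)) = lams j (Var (pred v)).
Proof.
  induction j; simpl; intros u k v H.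
  - destruct (Nat.eqb_spec v k); [lia|].
    destruct (Nat.ltb_spec k v); [reflexivity|lia].
  - rewrite IHj by lia. reflexivity.
Qed.

Lemma lift_lams : forall j d c v, c + j <= v ->
  lift d c (lams j (Var v)) = lams j (Var (v + d)).
Proof.
  induction j; simpl; intros d c v H.
  - destruct (Nat.leb_spec c v); [reflexivity|lia].
  - rewrite IHj by lia. reflexivity.
Qed.

Lemma free_lams : forall j k, free_in k (lams j (Var (k + j))).
Proof.
  induction j; simpl; intros k.
  - lia.
  - replace (k + S j) with (S k + j) by lia. apply IHj.
Qed.

Lemma sp_lam_inv : forall d b, sp d (Lam b) -> exists m k, Lam b = lams (S m) (Var k) /\ k = alpha + d + S m.
Proof.
  intros d b H; inversion H; subst.
  destruct m; simpl in *; [discriminate|]. eauto.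
Qed.

Lemma pres : forall t t', beta t t' -> forall d,
  (sp d t -> sp d t') /\ (good d t -> good d t').
Proof.
  induction 1; intros d.
  - assert (Hs : sp d (App (Lam b) u) -> sp d (bsubst u 0 b)).
    { intro Hs. inversion Hs; subst.
      + destruct m; simpl in *; discriminate.
      + apply sp_lam_inv in H2. destruct H2 as [m [k [E ->]]].
        simpl in E. injection E as E. subst b.
        rewrite bsubst_lams by lia. apply sp_head. lia. }
    split; [exact Hs|]. intro G; inversion G; subst. apply good_sp; auto.
  - assert (Hs : sp d (App a b) -> sp d (App a' b)).
    { intro Hs. inversion Hs; subst.
      + destruct m; simpl in *; discriminate.
      + apply sp_app; auto. apply (IHbeta d); auto. }
    split; [exact Hs|]. intro G; inversion G; subst. apply good_sp; auto.
  - assert (Hs : sp d (App a b) -> sp d (App a b')).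
    { intro Hs. inversion Hs; subst.
      + destruct m; simpl in *; discriminate.
      + apply sp_app; auto. apply (IHbeta d); auto. }
    split; [exact Hs|]. intro G; inversion G; subst. apply good_sp; auto.
  - assert (Hs : sp d (Lam b) -> False).
    { intro Hs. apply sp_lam_inv in Hs. destruct Hs as [m [k [E _]]].
      simpl in E. injection E as E. subst. eapply lams_var_nf; eauto. }
    split; [intro; exfalso; auto|].
    intro G; inversion G; subst.
    + apply good_lam. apply (IHbeta (S d)); auto.
    + exfalso; auto.
Qed.

Lemma keep : forall t t', beta t t' -> forall d,
  good d t -> free_in (alpha + d) t -> free_in (alpha + d) t'.
Proof.
  induction 1; intros d G F.
  - inversion G; subst. inversion H; subst.
    + destruct m; simpl in *; discriminate.
    + apply sp_lam_inv in H3. destruct H3 as [m [k [E ->]]].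
      simpl in E. injection E as E. subst b.
      rewrite bsubst_lams by lia.
      replace (pred (alpha + d + S m)) with (alpha + d + m) by lia.
      apply free_lams.
  - inversion G; subst. inversion H0; subst.
    + destruct m; simpl in *; discriminate.
    + simpl in *. destruct F; [left|right; auto]. apply IHbeta; auto.
      apply good_sp; auto.
  - inversion G; subst. inversion H0; subst.
    + destruct m; simpl in *; discriminate.
    + simpl in *. destruct F; [left; auto|right]. apply IHbeta; auto.
  - simpl in *. inversion G; subst.
    + replace (S (alpha + d)) with (alpha + S d) in * by lia. apply IHbeta; auto.
    + exfalso. apply sp_lam_inv in H0. destruct H0 as [m [k [E _]]].
      simpl in E. injection E as E. subst. eapply lams_var_nf; eauto.
Qed.

Lemma init : forall n x t, normal t -> forall d,
  good d (fsubst_at d (lams n (Var (alpha + n))) x t) /\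
  ((match t with Lam _ => False | _ => True end) ->
     sp d (fsubst_at d (lams n (Var (alpha + n))) x t)).
Proof.
  intros n x t; induction t; simpl; intros N d.
  - assert (sp d (if n0 =? x + d then lift d 0 (lams n (Var (alpha + n))) else Var n0)).
    { destruct (n0 =? x + d).
      + rewrite lift_lams by lia. apply sp_head. lia.
      + apply sp_var. }
    split; [apply good_sp|]; auto.
  - destruct N as [N1 [N2 N3]].
    assert (sp d (App (fsubst_at d (lams n (Var (alpha + n))) x t1)
                      (fsubst_at d (lams n (Var (alpha + n))) x t2))).
    { apply sp_app. apply (IHt1 N1 d); auto. apply (IHt2 N2 d). }
    split; [apply good_sp|]; auto.
  - split; [|tauto]. apply good_lam. apply (IHt N (S d)).
Qed.

Lemma initfree : forall n x t d, free_in (x + d) t ->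
  free_in (alpha + d) (fsubst_at d (lams n (Var (alpha + n))) x t).
Proof.
  intros n x t; induction t; simpl; intros d F.
  - subst. rewrite Nat.eqb_refl. rewrite lift_lams by lia.
    replace (alpha + n + d) with (alpha + d + n) by lia. apply free_lams.
  - destruct F; [left|right]; auto.
  - replace (S (alpha + d)) with (alpha + S d) by lia. apply IHt.
    replace (x + S d) with (S (x + d)) by lia. auto.
Qed.

End S.

Theorem lemma2p1p2 (t v : term) (alpha x n : nat) :
  normal t -> free_in x t ->
  beta_star (fsubst (lams n (Var (alpha + n))) x t) v ->
  free_in alpha v.
Proof.
  intros N F B. unfold fsubst in B.
  assert (G : good alpha 0 (fsubst_at 0 (lams n (Var (alpha + n))) x t))
    by (apply (init alpha n x t N 0)).
  assert (Fr : free_in (alpha + 0) (fsubst_at 0 (lams n (Var (alpha + n))) x t)).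
  { apply initfree. rewrite Nat.add_0_r. auto. }
  clear N F. revert G Fr.
  induction B; intros G Fr.
  - rewrite Nat.add_0_r in Fr; auto.
  - apply IHB.
    + apply (proj2 (pres alpha _ _ H 0)); auto.
    + eapply keep; eauto.
Qed.
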